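(* Let $\chi_k$ be a sequence of irrigation patterns converging uniformly to an irrigation pattern $\chi$, and let $t_k\in I$ with $t_k\to t$. Then for $\mathbb P$-almost all $p\in\Gamma$, $$m_\chi(\chi(p,t))\ge\limsup_{k\to\infty}m_{\chi_k}(\chi_k(p,t_k)).$$
   Context: A reference space $(\Gamma,\mathcal B(\Gamma),\mathbb P)$ is a complete separable uncountable metric space with a positive finite atomless Borel measure $\mathbb P$. $I=[0,1]$. An irrigation pattern is a measurable $\chi:\Gamma\times I\to\mathbb{R}^n$ with $\chi_p=\chi(p,\cdot)$ absolutely continuous for $\mathbb P$-a.e. $p$. $\chi_k\to\chi$ uniformly means $\chi_k(p,\cdot)\to\chi(p,\cdot)$ uniformly on $I$ for $\mathbb P$-a.e. $p$. $m_\chi(x)=\mathbb P(\{q\in\Gamma:x\in\chi_q(I)\})$. *)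

(* Defs.v *)
From HB Require Import structures.
From mathcomp Require Import all_boot all_order all_algebra.
From mathcomp Require Import all_classical all_reals all_analysis.
Set Implicit Arguments.
Unset Strict Implicit.
Unset Printing Implicit Defensive.
Import Order.TTheory GRing.Theory Num.Theory.
Import numFieldNormedType.Exports.
Local Open Scope classical_set_scope.
Local Open Scope ring_scope.

Notation borel_of T := (g_sigma_algebraType (@open T)).

Section Defs.
Variable R : realType.

(* Reference space: (Gamma, B(Gamma), P) with Gamma a complete separable
   uncountable metric space and P a positive finite atomless Borel measure. *)
Definition reference_space (Gamma : completePseudoMetricType R)
    (P : {finite_measure set (borel_of Gamma) -> \bar R}) : Prop :=
  [/\ hausdorff_space Gamma,
      (exists D : set Gamma, countable D /\ dense D),
      ~ countable [set: Gamma],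
      (0 < P [set: borel_of Gamma])%E &
      (forall A : set (borel_of Gamma), measurable A -> (0 < P A)%E ->
         exists2 B : set (borel_of Gamma), measurable B /\ B `<=` A &
           (0 < P B)%E /\ (P B < P A)%E)].

Definition abs_continuous_on (n : nat) (a b : R) (f : R -> 'rV[R]_n) : Prop :=
  forall e : R, 0 < e -> exists2 d : R, 0 < d &
    forall (k : nat) (u v : nat -> R),
      (forall i, (i < k)%N -> a <= u i /\ u i <= v i /\ v i <= b) ->
      (forall i j, (i < k)%N -> (j < k)%N -> i <> j ->
          v i <= u j \/ v j <= u i) ->
      \sum_(0 <= i < k) (v i - u i) < d ->
      \sum_(0 <= i < k) `|f (v i) - f (u i)| < e.

(* An irrigation pattern chi : Gamma x I -> R^n (only values on I = [0,1]
   matter): jointly (Borel) measurable, and chi_p absolutely continuous on I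
   for P-a.e. p. Measurability into R^n is stated coordinatewise. *)
Definition irrigation_pattern (Gamma : completePseudoMetricType R) (n : nat)
    (P : {finite_measure set (borel_of Gamma) -> \bar R})
    (chi : Gamma -> R -> 'rV[R]_n) : Prop :=
  (forall i : 'I_n,
     measurable_fun (setT `*` `[0%R, 1%R] : set (borel_of Gamma * R)%type)
       (fun z : (borel_of Gamma * R)%type => chi z.1 z.2 ord0 i)) /\
  {ae P, forall p : borel_of Gamma, abs_continuous_on 0 1 (chi p)}.

(* m_chi(x) = P({q : x \in chi_q(I)}), P evaluated as outer measure
   (equal to the completed measure on P-measurable sets). *)
Definition m_of (Gamma : completePseudoMetricType R) (n : nat)
    (P : {finite_measure set (borel_of Gamma) -> \bar R})
    (chi : Gamma -> R -> 'rV[R]_n) (x : 'rV[R]_n) : \bar R :=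
  ereal_inf [set P A | A in [set A : set (borel_of Gamma) | measurable A /\
     [set q : borel_of Gamma | exists2 s, s \in `[0%R, 1%R] & chi q s = x]
       `<=` A]].

End Defs.

(* Main.v *)
Require Import Defs.
From HB Require Import structures.
From mathcomp Require Import all_boot all_order all_algebra.
From mathcomp Require Import all_classical all_reals all_analysis.
From mathcomp Require Import lra.
Import Order.TTheory GRing.Theory Num.Theory.
Import numFieldNormedType.Exports.
Local Open Scope classical_set_scope.
Local Open Scope ring_scope.
Set Implicit Arguments.
Unset Strict Implicit.

Section H.
Variable R : realType.

Lemma rV_norm_lt n (v : 'rV[R]_n) (e : R) : 0 < e ->
  (`|v| < e <-> forall i, `|v ord0 i| < e).
Proof.
move=> e0.
have := @mx_norm_ball R 1 n.
move=> Hb.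
have E : (`|v| < e) <-> (ball (0 : 'rV[R]_n) e v).
  by rewrite Hb /ball_ /= sub0r normrN.
rewrite E; split.
  move=> [_ H] i; have := H ord0 i; rewrite /ball /= mxE sub0r normrN; exact.
move=> H; split => // i j; rewrite (ord1 i) /ball /= mxE sub0r normrN; exact: H.
Qed.

Variable Gamma : completePseudoMetricType R.

Lemma sec_meas (g : Gamma -> R -> R) :
  measurable_fun (setT `*` `[0%R, 1%R] : set (borel_of Gamma * R)%type)
       (fun z : (borel_of Gamma * R)%type => g z.1 z.2) ->
  forall s, s \in `[0%R, 1%R] ->
  measurable_fun (setT : set (borel_of Gamma)) (fun q => g q s).
Proof.
move=> mg s s01 _ Y mY; rewrite setTI.
have mD : measurable (setT `*` `[0%R, 1%R] : set (borel_of Gamma * R)%type).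
  by apply: measurableX => //; exact: measurable_itv.
have := measurable_ysection s (mg mD Y mY).
congr measurable; apply/seteqP; split => q /=.
  by rewrite /ysection /= inE => -[].
by move=> Yq; rewrite /ysection /= inE; split => //; split => //=; rewrite -inE.
Qed.

Lemma meas_normlt n (g : borel_of Gamma -> 'rV[R]_n) (e : R) :
  (forall i, measurable_fun setT (fun q => g q ord0 i)) ->
  measurable [set q | `|g q| < e].
Proof.
move=> mg; have [e0|e0] := ltP 0 e; last first.
  rewrite (_ : [set q | _] = set0) //; apply/seteqP; split => q //=.
  by move=> /lt_le_trans /(_ e0); rewrite normr_lt0.
rewrite (_ : [set q | _] = \bigcap_(i in [set: 'I_n]) [set q | `|g q ord0 i| < e]).
  apply: fin_bigcap_measurable; first exact: finite_finset.
  move=> i _; rewrite -[X in measurable X]setTI.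
  have := mg i measurableT [set y : R | `|y| < e].
  apply; rewrite (_ : [set y : R | `|y| < e] = ball 0 e).
    by rewrite ball_itv; exact: measurable_itv.
  by apply/seteqP; split => y /=; rewrite /ball /= sub0r normrN.
apply/seteqP; split => q /=.
  by move=> /(@rV_norm_lt n (g q) e e0) H i _; exact: H.
by move=> H; apply/(@rV_norm_lt n (g q) e e0) => i; exact: H.
Qed.
Lemma AC_unif n (f : R -> 'rV[R]_n) : abs_continuous_on 0 1 f ->
  forall e : R, 0 < e -> exists2 d : R, 0 < d & forall u v : R,
    u \in `[0, 1] -> v \in `[0, 1] -> `|v - u| < d -> `|f v - f u| < e.
Proof.
move=> H e e0; have [d d0 Hd] := H e e0; exists d => // u v.
wlog uv : u v / u <= v.
  move=> W u01 v01 duv; have [le|lt] := leP u v; first exact: W.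
  by rewrite distrC; apply: W => //; [exact: ltW | rewrite distrC].
rewrite !in_itv /= => /andP[u0 u1] /andP[v0 v1] duv.
have := Hd 1%N (fun _ => u) (fun _ => v).
rewrite !big_nat1; apply.
- by move=> i _; split => //; split.
- by move=> i j; rewrite !ltnS !leqn0 => /eqP -> /eqP ->.
- by rewrite ger0_norm ?subr_ge0 in duv.
Qed.
Lemma img_closed n (f : R -> 'rV[R]_n) (x : 'rV[R]_n) : abs_continuous_on 0 1 f ->
  (forall m : nat, exists2 s, s \in `[0%R, 1%R] & `|f s - x| < m.+1%:R^-1) ->
  exists2 s, s \in `[0%R, 1%R] & f s = x.
Proof.
move=> fAC H.
have /choice [s Hs] : forall m : nat, exists s, s \in `[0%R, 1%R] /\ `|f s - x| < m.+1%:R^-1.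
  by move=> m; have [s ? ?] := H m; exists s.
have [c [c01 cl]] : `[0%R, 1%R] `&` cluster (s @ \oo) !=set0.
  apply: segment_compact.
  by exists 0%N => // m _ /=; have := (Hs m).1; rewrite inE.
 exists c; first by rewrite inE.
have H' : forall e, 0 < e -> `|f c - x| < e.
  move=> e e0.
  have e20 : 0 < e / 2 by rewrite divr_gt0.
  have [d d0 Hd] := @AC_unif n f fAC _ e20.
  have [M HM] := ltr_add_invr e20; rewrite add0r in HM.
  have := cl (s @` [set m | (M <= m)%N]) (ball c d).
  case.
  - by exists M => // m /= Mm; exists m.
  - exact: nbhsx_ballx.
  move=> y [[m /= Mm <-] bd].
  have h1 : `|f c - f (s m)| < e / 2.
    by apply: Hd; [exact: (Hs m).1 | by rewrite inE | exact: bd].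
  have h2 : `|f (s m) - x| < e / 2.
    apply: (lt_le_trans (Hs m).2); apply: le_trans (ltW HM).
    by rewrite lef_pV2 ?posrE // ler_nat.
  have := ler_normD (f c - f (s m)) (f (s m) - x).
  rewrite addrA subrK => h3.
  apply: (le_lt_trans h3).
  by rewrite [e]splitr ltrD.
apply/eqP; rewrite -subr_eq0 -normr_eq0; apply/negPn/negP => ne.
by have := H' `|f c - x|; rewrite lt0r normr_ge0 ne ltxx => /(_ isT).
Qed.
Lemma unif_ext n (F : nat -> R -> 'rV[R]_n) (f : R -> 'rV[R]_n) :
  {uniform `[0%R, 1%R], F @ \oo --> f} -> forall e : R, 0 < e ->
  \forall k \near \oo, forall s, s \in `[0%R, 1%R] -> `|f s - F k s| < e.
Proof.
move=> H e e0.
have := H [set h | forall y, y \in `[0%R, 1%R] -> ball (f y) e (h y)].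
case.
  apply/uniform_nbhs; exists [set xy | ball xy.1 e xy.2]; split.
    exact: (entourage_ball _ (PosNum e0)).
  by move=> h /= Hh y; rewrite inE; exact: Hh.
move=> N _ HN; exists N => // k Nk s s01.
have := HN k Nk s s01.
by rewrite -ball_normE.
Qed.
Lemma rat_near (s d : R) : s \in `[0%R, 1%R] -> 0 < d ->
  exists r : rat, (ratr r : R) \in `[0%R, 1%R] /\ `|s - ratr r| < d.
Proof.
rewrite in_itv /= => /andP[s0 s1] d0.
set m := Num.min d (1/2 : R).
have m0 : 0 < m by rewrite lt_min d0 divr_gt0.
have md : m <= d by rewrite ge_min lexx.
have m2 : m <= 1/2 by rewrite ge_min lexx orbT.
have [sh|sh] := leP s (1/2).
  have sm : s < s + m by rewrite ltrDl.
  have [r] := rat_in_itvoo sm.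
  rewrite in_itv /= => /andP[h1 h2]; exists r; split.
    by rewrite in_itv /=; apply/andP; split; lra.
  by rewrite ltr0_norm ?subr_lt0 //; lra.
have sm : s - m < s by rewrite ltrBlDr ltrDl.
have [r] := rat_in_itvoo sm.
rewrite in_itv /= => /andP[h1 h2]; exists r; split.
  by rewrite in_itv /=; apply/andP; split; lra.
by rewrite gtr0_norm ?subr_gt0 //; lra.
Qed.
Lemma esup_le_ev (u : (\bar R)^nat) (c : \bar R) :
  (exists N, forall k, (N <= k)%N -> (u k <= c)%E) -> (limn_esup u <= c)%E.
Proof.
move=> [N HN]; rewrite limn_esup_lim; apply: lime_le; first exact: is_cvg_esups.
exists N => // m /= Nm; apply: ge_ereal_sup => _ [k /= mk <-].
exact: HN (leq_trans Nm mk).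
Qed.

Lemma meas_normlt2 n (g1 g2 : borel_of Gamma -> 'rV[R]_n) (e : R) :
  (forall i, measurable_fun setT (fun q => g1 q ord0 i)) ->
  (forall i, measurable_fun setT (fun q => g2 q ord0 i)) ->
  measurable [set q | `|g1 q - g2 q| < e].
Proof.
move=> m1 m2; apply: (@meas_normlt n (fun q => g1 q - g2 q)) => i.
rewrite (_ : (fun q => (g1 q - g2 q) ord0 i) = (fun q => g1 q ord0 i - g2 q ord0 i)).
  exact: measurable_realfun.measurable_funB.
by apply/funext => q; rewrite !mxE.
Qed.
End H.
Unset Implicit Arguments.
Set Strict Implicit.
Theorem mainTheorem13 (R : realType) (Gamma : completePseudoMetricType R)
  (P : {finite_measure set (borel_of Gamma) -> \bar R}) (n : nat)
  (chik : nat -> Gamma -> R -> 'rV[R]_n) (chi : Gamma -> R -> 'rV[R]_n)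
  (tk : nat -> R) (t : R) :
  reference_space P ->
  (forall k, irrigation_pattern P (chik k)) ->
  irrigation_pattern P chi ->
  {ae P, forall p : borel_of Gamma,
     {uniform `[0%R, 1%R], (fun k => chik k p) @ \oo --> chi p}} ->
  (forall k, tk k \in `[0%R, 1%R]) ->
  tk @ \oo --> t ->
  {ae P, forall p : borel_of Gamma,
     (limn_esup (fun k => m_of P (chik k) (chik k p (tk k)))
        <= m_of P chi (chi p t))%E}.
Proof.
move=> _ Hk [mchi Hc] Hu tk01 tkt.
have mchik k i := (Hk k).1 i.
have HK : {ae P, forall p : borel_of Gamma, forall k,
    abs_continuous_on 0 1 (chik k p)}.
  by apply: ae_foralln => k; exact: (Hk k).2.
pose good (p : borel_of Gamma) := [/\ abs_continuous_on 0 1 (chi p),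
    (forall k, abs_continuous_on 0 1 (chik k p)) &
    {uniform `[0%R, 1%R], (fun k => chik k p) @ \oo --> chi p}].
have Hall : {ae P, forall p, good p}.
  have H2 : {ae P, forall p : borel_of Gamma, (forall k, abs_continuous_on 0 1 (chik k p)) /\
     {uniform `[0%R, 1%R], (fun k => chik k p) @ \oo --> chi p}}.
    exact: (filterS2 _ (fun p a b => conj a b) HK Hu).
  exact: (filterS2 _ (fun p a (b : _ /\ _) => And3 a b.1 b.2) Hc H2).
have [N [mN PN0 HN]] := Hall.
have G q : ~ N q -> good q.
  by move=> Nq; apply: contrapT => gq; apply: Nq; apply: HN.
apply: (filterS _ Hall) => p [ACp ACkp Up].
set x := chi p t.
have t01 : t \in `[0%R, 1%R].
  rewrite in_itv /=; apply/andP; split.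
    rewrite leNgt; apply/negP => t0.
    have t0' : 0 < - t by rewrite oppr_gt0.
    have [K _ HK'] := (cvgrPdist_lt _ _).1 tkt _ t0'.
    have := HK' K (leqnn K); have := tk01 K; rewrite in_itv /= => /andP[h1 h2].
    by rewrite ltr_norml; lra.
  rewrite leNgt; apply/negP => t1.
  have t1' : 0 < t - 1 by rewrite subr_gt0.
  have [K _ HK'] := (cvgrPdist_lt _ _).1 tkt _ t1'.
  have := HK' K (leqnn K); have := tk01 K; rewrite in_itv /= => /andP[h1 h2].
  by rewrite ltr_norml; lra.
have xk_cvg : forall e : R, 0 < e -> exists K, forall k, (K <= k)%N ->
    `|x - chik k p (tk k)| < e.
  move=> e e0; have e20 : 0 < e / 2 by rewrite divr_gt0.
  have [K1 _ HK1] := unif_ext Up e20.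
  have [d d0 Hd] := AC_unif ACp e20.
  have [K2 _ HK2] := (cvgrPdist_lt _ _).1 tkt d d0.
  exists (maxn K1 K2) => k; rewrite geq_max => /andP[k1 k2].
  have h1 := Hd (tk k) t (tk01 k) t01 (HK2 k k2).
  have h2 := HK1 k k1 (tk k) (tk01 k).
  have := ler_normD (chi p t - chi p (tk k)) (chi p (tk k) - chik k p (tk k)).
  rewrite addrA subrK => h3.
  by rewrite /x; apply: (le_lt_trans h3); rewrite [e]splitr ltrD.
apply: le_ereal_inf_tmp => _ [A [mA SA] <-].
pose T (e : R) : set (borel_of Gamma) := ~` N `&` \bigcup_(r : rat)
  (if (ratr r : R) \in `[0%R, 1%R] then [set q | `|chi q (ratr r) - x| < e]
   else set0).
have mT e : measurable (T e).
  apply: measurableI; first exact: measurableC.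
  apply: bigcupT_measurable_rat => r; case: ifP => r01; last exact: measurable0.
  apply: (@meas_normlt2 R Gamma n (fun q => chi q (ratr r)) (fun _ => x) e) => i.
    exact: (@sec_meas R Gamma (fun q s => chi q s ord0 i) (mchi i) _ r01).
  exact: measurable_cst.
have finP (U : set (borel_of Gamma)) : measurable U -> (P U < +oo)%E.
  by move=> mU; rewrite ltey_eq (fin_num_measure P).
have Claim1 : forall e : R, 0 < e ->
    (limn_esup (fun k => m_of P (chik k) (chik k p (tk k))) <= P (T e))%E.
  move=> e e0; set eps := e / 3; have eps0 : 0 < eps by rewrite divr_gt0.
  pose B (j : nat) : set (borel_of Gamma) := N `|` \bigcup_k \bigcup_(r : rat)
     (if ((j <= k)%N && ((ratr r : R) \in `[0%R, 1%R])) then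
        ~` [set q | `|chik k q (ratr r) - chi q (ratr r)| < eps] else set0).
  have mB j : measurable (B j).
    apply: measurableU => //; apply: bigcupT_measurable => k.
    apply: bigcupT_measurable_rat => r.
    case: ifP => [/andP[_ r01]|_]; last exact: measurable0.
    apply: measurableC.
    apply: (@meas_normlt2 R Gamma n (fun q => chik k q (ratr r))
       (fun q => chi q (ratr r)) eps) => i.
      exact: (@sec_meas R Gamma (fun q s => chik k q s ord0 i) (mchik k i) _ r01).
    exact: (@sec_meas R Gamma (fun q s => chi q s ord0 i) (mchi i) _ r01).
  have Bdec : nonincreasing_seq B.
    move=> j j' jj'; apply/subsetPset => q [Nq|[k _ [r _ H]]]; first by left.
    right; exists k => //; exists r => //.
    move: H; case: ifP => [/andP[jk r01] H|_ //].
    by rewrite r01 (leq_trans jj' jk).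
  have Bcap : \bigcap_j B j `<=` N.
    move=> q Bq; apply: contrapT => Nq; have [_ _ Uq] := G q Nq.
    have [J _ HJ] := unif_ext Uq eps0.
    case: (Bq J I) => // -[k _ [r _]].
    case: ifP => [/andP[Jk r01]|//] /= H; apply: H.
    by rewrite distrC; exact: HJ k Jk _ r01.
  have PB : (P \o B @ \oo --> 0)%E.
    have -> : 0%E = P (\bigcap_j B j).
      apply/esym; apply: (subset_measure0 _ mN Bcap PN0).
      exact: bigcapT_measurable.
    apply: nonincreasing_cvg_mu => //; first exact: finP.
    exact: bigcapT_measurable.
  have Hj : forall j, (limn_esup (fun k => m_of P (chik k) (chik k p (tk k)))
      <= P (T e) + P (B j))%E.
    move=> j; apply: esup_le_ev.
    have [K HKx] := xk_cvg _ eps0.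
    exists (maxn j K) => k; rewrite geq_max => /andP[jk Kk].
    apply: le_trans (measureU2 P (mT e) (mB j)).
    apply: ereal_inf_lbound; exists (T e `|` B j) => //; split.
      exact: measurableU.
    move=> q /= [s s01 Hs].
    have [Nq|Nq] := pselect (N q); first by right; left.
    have [_ ACkq _] := G q Nq.
    have [d d0 Hd] := AC_unif (ACkq k) eps0.
    have [r [r01 rs]] := rat_near s01 d0.
    have [hr|hr] := pselect (`|chik k q (ratr r) - chi q (ratr r)| < eps); last first.
      by right; right; exists k => //; exists r => //; rewrite jk r01.
    left; split => //; exists r => //; rewrite r01 /=.
    have rs' : `|ratr r - s| < d by rewrite distrC.
    have h1 := Hd s (ratr r) s01 r01 rs'.
    have h3 := HKx k Kk.
    have eq : chi q (ratr r) - x = (chi q (ratr r) - chik k q (ratr r)) +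
       (chik k q (ratr r) - chik k q s) + (chik k p (tk k) - x).
      by rewrite -Hs !addrA !subrK.
    rewrite eq; apply: (le_lt_trans (ler_normD _ _)).
    apply: (le_lt_trans (lerD (ler_normD _ _) (lexx _))).
    rewrite (distrC (chi q _)) (distrC (chik k p _)).
    rewrite /eps in hr h1 h3; lra.
  have Hcv : ((fun j => P (T e) + P (B j)) @ \oo --> P (T e) + 0)%E.
    apply: cvgeD; [by rewrite fin_num_adde_defl | exact: cvg_cst | exact: PB].
  rewrite -[P (T e)]adde0 -(cvg_lim _ Hcv) //.
  apply: lime_ge; first exact: cvgP Hcv.
  by exists 0%N => // j _; exact: Hj.
pose Tm (m : nat) := T (m.+1%:R^-1).
have Tdec : nonincreasing_seq Tm.
  move=> m m' mm'; apply/subsetPset => q [Nq [r _ H]]; split => //; exists r => //.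
  move: H; case: ifP => // r01 /= H; apply: (lt_le_trans H).
  by rewrite lef_pV2 ?posrE // ler_nat ltnS.
have Tcap : \bigcap_m Tm m `<=` A.
  move=> q Tq; have [Nq _] := Tq 0%N I; have [ACq _ _] := G q Nq.
  apply: SA => /=; apply: (img_closed ACq) => m.
  have [_ [r _]] := Tq m I; case: ifP => // r01 /= H.
  by exists (ratr r).
have PT : (P \o Tm @ \oo --> P (\bigcap_m Tm m))%E.
  apply: nonincreasing_cvg_mu => //; [exact: finP (mT _) | by move=> i; exact: mT | ].
  by apply: bigcapT_measurable => i; exact: mT.
apply: (@le_trans _ _ (P (\bigcap_m Tm m))); last first.
  apply: le_measure Tcap; rewrite inE //; apply: bigcapT_measurable => i; exact: mT.
rewrite -(cvg_lim _ PT) //.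
apply: lime_ge; first exact: cvgP PT.
by exists 0%N => // m _; apply: Claim1; rewrite invr_gt0 ltr0Sn.
Qed.
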